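(* For every command $c$ and stores $\sigma,\sigma'$ of the While-language: $(c,\sigma)\Rightarrow^\infty$ if and only if $(c,\sigma,\Downarrow)\Rightarrow^{co}_G\sigma',\Uparrow$.
   Context: While-language syntax: variables $x$ range over a countably infinite set $\mathit{Var}$; $n$ ranges over natural numbers; values are $v ::= \mathsf{null}\mid n$ ($\mathsf{null}$ distinct from every natural number); expressions are $e ::= v\mid x\mid e_1\oplus e_2$ with $\oplus\in\{+,-,*\}$, where $\oplus(n_1,n_2)$ is the result of the operation on naturals; commands are $c ::= \mathsf{skip}\mid\mathsf{alloc}\ x\mid x:=e\mid c_1;c_2\mid \mathsf{if}\ e\ c_1\ c_2\mid\mathsf{while}\ e\ c$. A store $\sigma$ is a finite partial map from $\mathit{Var}$ to values, with domain $\mathrm{dom}(\sigma)$, lookup $\sigma(x)$, update $\sigma[x\mapsto v]$. Expression evaluation $(e,\sigma)\Rightarrow_E v$ is the least relation with: $(v,\sigma)\Rightarrow_E v$; $(x,\sigma)\Rightarrow_E\sigma(x)$ if $x\in\mathrm{dom}(\sigma)$; if $(e_1,\sigma)\Rightarrow_E n_1$ and $(e_2,\sigma)\Rightarrow_E n_2$ with $n_1,n_2$ naturals then $(e_1\oplus e_2,\sigma)\Rightarrow_E\oplus(n_1,n_2)$. Big-step relation $(c,\sigma)\Rightarrow_B\sigma'$ is the least relation with: $(\mathsf{skip},\sigma)\Rightarrow_B\sigma$; $(\mathsf{alloc}\ x,\sigma)\Rightarrow_B\sigma[x\mapsto\mathsf{null}]$ if $x\notin\mathrm{dom}(\sigma)$;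 $(x:=e,\sigma)\Rightarrow_B\sigma[x\mapsto v]$ if $x\in\mathrm{dom}(\sigma)$ and $(e,\sigma)\Rightarrow_E v$; $(c_1;c_2,\sigma)\Rightarrow_B\sigma''$ if $(c_1,\sigma)\Rightarrow_B\sigma'$ and $(c_2,\sigma')\Rightarrow_B\sigma''$; $(\mathsf{if}\ e\ c_1\ c_2,\sigma)\Rightarrow_B\sigma'$ if $(e,\sigma)\Rightarrow_E v$, $v\ne0$, $(c_1,\sigma)\Rightarrow_B\sigma'$; $(\mathsf{if}\ e\ c_1\ c_2,\sigma)\Rightarrow_B\sigma'$ if $(e,\sigma)\Rightarrow_E0$, $(c_2,\sigma)\Rightarrow_B\sigma'$; $(\mathsf{while}\ e\ c,\sigma)\Rightarrow_B\sigma''$ if $(e,\sigma)\Rightarrow_E v$, $v\ne0$, $(c,\sigma)\Rightarrow_B\sigma'$, $(\mathsf{while}\ e\ c,\sigma')\Rightarrow_B\sigma''$; $(\mathsf{while}\ e\ c,\sigma)\Rightarrow_B\sigma$ if $(e,\sigma)\Rightarrow_E0$. The big-step divergence predicate $(c,\sigma)\Rightarrow^\infty$ is the greatest predicate such that every element is the conclusion of an instance of one of these rules whose $\Rightarrow^\infty$-premises are in it: $(c_1,\sigma)\Rightarrow^\infty$ gives $(c_1;c_2,\sigma)\Rightarrow^\infty$; $(c_1,\sigma)\Rightarrow_B\sigma'$ and $(c_2,\sigma')\Rightarrow^\infty$ give $(c_1;c_2,\sigma)\Rightarrow^\infty$; $(e,\sigma)\Rightarrow_E v$, $v\ne0$,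 $(c_1,\sigma)\Rightarrow^\infty$ give $(\mathsf{if}\ e\ c_1\ c_2,\sigma)\Rightarrow^\infty$; $(e,\sigma)\Rightarrow_E0$, $(c_2,\sigma)\Rightarrow^\infty$ give $(\mathsf{if}\ e\ c_1\ c_2,\sigma)\Rightarrow^\infty$; $(e,\sigma)\Rightarrow_E v$, $v\ne0$, $(c,\sigma)\Rightarrow^\infty$ give $(\mathsf{while}\ e\ c,\sigma)\Rightarrow^\infty$; $(e,\sigma)\Rightarrow_E v$, $v\ne0$, $(c,\sigma)\Rightarrow_B\sigma'$, $(\mathsf{while}\ e\ c,\sigma')\Rightarrow^\infty$ give $(\mathsf{while}\ e\ c,\sigma)\Rightarrow^\infty$. Flag-based big-step semantics: status flags $\delta ::= \Downarrow\mid\Uparrow$ (convergent / divergent). Expression evaluation $(e,\sigma,\delta)\Rightarrow_{GE}v,\delta'$ is the least relation with: $(v,\sigma,\Downarrow)\Rightarrow_{GE}v,\Downarrow$; $(x,\sigma,\Downarrow)\Rightarrow_{GE}\sigma(x),\Downarrow$ if $x\in\mathrm{dom}(\sigma)$; if $(e_1,\sigma,\Downarrow)\Rightarrow_{GE}n_1,\delta$ and $(e_2,\sigma,\delta)\Rightarrow_{GE}n_2,\delta'$ ($n_1,n_2$ naturals) then $(e_1\oplus e_2,\sigma,\Downarrow)\Rightarrow_{GE}\oplus(n_1,n_2),\delta'$; and $(e,\sigma,\Uparrow)\Rightarrow_{GE}v,\Uparrow$ for every value $v$. The command rules for judgments $(c,\sigma,\delta)\Rightarrow_G\sigma',\delta'$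 are: $(\mathsf{skip},\sigma,\Downarrow)\Rightarrow_G\sigma,\Downarrow$; $(\mathsf{alloc}\ x,\sigma,\Downarrow)\Rightarrow_G\sigma[x\mapsto\mathsf{null}],\Downarrow$ if $x\notin\mathrm{dom}(\sigma)$; $(x:=e,\sigma,\Downarrow)\Rightarrow_G\sigma[x\mapsto v],\delta$ if $x\in\mathrm{dom}(\sigma)$ and $(e,\sigma,\Downarrow)\Rightarrow_{GE}v,\delta$; $(c_1;c_2,\sigma,\Downarrow)\Rightarrow_G\sigma'',\delta'$ if $(c_1,\sigma,\Downarrow)\Rightarrow_G\sigma',\delta$ and $(c_2,\sigma',\delta)\Rightarrow_G\sigma'',\delta'$; $(\mathsf{if}\ e\ c_1\ c_2,\sigma,\Downarrow)\Rightarrow_G\sigma',\delta'$ if $v\ne0$, $(e,\sigma,\Downarrow)\Rightarrow_{GE}v,\delta$ and $(c_1,\sigma,\delta)\Rightarrow_G\sigma',\delta'$; $(\mathsf{if}\ e\ c_1\ c_2,\sigma,\Downarrow)\Rightarrow_G\sigma',\delta'$ if $(e,\sigma,\Downarrow)\Rightarrow_{GE}0,\delta$ and $(c_2,\sigma,\delta)\Rightarrow_G\sigma',\delta'$; $(\mathsf{while}\ e\ c,\sigma,\Downarrow)\Rightarrow_G\sigma'',\delta''$ if $(e,\sigma,\Downarrow)\Rightarrow_{GE}v,\delta$, $v\ne0$, $(c,\sigma,\delta)\Rightarrow_G\sigma',\delta'$ and $(\mathsf{while}\ e\ c,\sigma',\delta')\Rightarrow_G\sigma'',\delta''$; $(\mathsf{while}\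 e\ c,\sigma,\Downarrow)\Rightarrow_G\sigma,\delta$ if $(e,\sigma,\Downarrow)\Rightarrow_{GE}0,\delta$; $(c,\sigma,\Uparrow)\Rightarrow_G\sigma',\Uparrow$ for every store $\sigma'$. $\Rightarrow^{co}_G$ denotes the coinductive interpretation of these command rules: the greatest relation such that every element is the conclusion of a rule instance whose command premises lie in it (the $\Rightarrow_{GE}$ premises refer to the expression relation above). *)

(* Defs.v *)
From HB Require Import structures.
From mathcomp Require Import all_boot finmap.
Set Implicit Arguments. Unset Strict Implicit. Unset Printing Implicit Defensive.
Local Open Scope fmap_scope.

Definition var := nat.

Inductive val : Type := Vnull | Vnat (n : nat).

Inductive binop : Type := Oplus | Ominus | Omult.

Definition eval_op (o : binop) (n1 n2 : nat) : nat :=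
  match o with Oplus => n1 + n2 | Ominus => n1 - n2 | Omult => n1 * n2 end.

Inductive expr : Type :=
  | Eval (v : val)
  | Evar (x : var)
  | Eop (o : binop) (e1 e2 : expr).

Inductive cmd : Type :=
  | Cskip
  | Calloc (x : var)
  | Cassign (x : var) (e : expr)
  | Cseq (c1 c2 : cmd)
  | Cif (e : expr) (c1 c2 : cmd)
  | Cwhile (e : expr) (c : cmd).

Definition store := {fmap var -> val}.

Inductive evalE : expr -> store -> val -> Prop :=
  | E_val v s : evalE (Eval v) s v
  | E_var x (s : store) v : s.[? x] = Some v -> evalE (Evar x) s v
  | E_op o e1 e2 s n1 n2 :
      evalE e1 s (Vnat n1) -> evalE e2 s (Vnat n2) ->
      evalE (Eop o e1 e2) s (Vnat (eval_op o n1 n2)).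

Inductive bigstep : cmd -> store -> store -> Prop :=
  | B_skip s : bigstep Cskip s s
  | B_alloc x s : x \notin domf s -> bigstep (Calloc x) s s.[x <- Vnull]
  | B_assign x e s v : x \in domf s -> evalE e s v ->
      bigstep (Cassign x e) s s.[x <- v]
  | B_seq c1 c2 s s' s'' : bigstep c1 s s' -> bigstep c2 s' s'' ->
      bigstep (Cseq c1 c2) s s''
  | B_if_true e c1 c2 s s' v : evalE e s v -> v <> Vnat 0 -> bigstep c1 s s' ->
      bigstep (Cif e c1 c2) s s'
  | B_if_false e c1 c2 s s' : evalE e s (Vnat 0) -> bigstep c2 s s' ->
      bigstep (Cif e c1 c2) s s'
  | B_while_true e c s s' s'' v : evalE e s v -> v <> Vnat 0 ->
      bigstep c s s' -> bigstep (Cwhile e c) s' s'' ->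
      bigstep (Cwhile e c) s s''
  | B_while_false e c s : evalE e s (Vnat 0) -> bigstep (Cwhile e c) s s.

CoInductive diverges : cmd -> store -> Prop :=
  | D_seq1 c1 c2 s : diverges c1 s -> diverges (Cseq c1 c2) s
  | D_seq2 c1 c2 s s' : bigstep c1 s s' -> diverges c2 s' ->
      diverges (Cseq c1 c2) s
  | D_if_true e c1 c2 s v : evalE e s v -> v <> Vnat 0 -> diverges c1 s ->
      diverges (Cif e c1 c2) s
  | D_if_false e c1 c2 s : evalE e s (Vnat 0) -> diverges c2 s ->
      diverges (Cif e c1 c2) s
  | D_while1 e c s v : evalE e s v -> v <> Vnat 0 -> diverges c s ->
      diverges (Cwhile e c) s
  | D_while2 e c s s' v : evalE e s v -> v <> Vnat 0 -> bigstep c s s' ->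
      diverges (Cwhile e c) s' -> diverges (Cwhile e c) s.

(* Status flags: Conv = convergent (⇓), Div = divergent (⇑). *)
Inductive status : Type := Conv | Div.

Inductive evalGE : expr -> store -> status -> val -> status -> Prop :=
  | GE_val v s : evalGE (Eval v) s Conv v Conv
  | GE_var x (s : store) v : s.[? x] = Some v -> evalGE (Evar x) s Conv v Conv
  | GE_op o e1 e2 s n1 n2 d d' :
      evalGE e1 s Conv (Vnat n1) d -> evalGE e2 s d (Vnat n2) d' ->
      evalGE (Eop o e1 e2) s Conv (Vnat (eval_op o n1 n2)) d'
  | GE_div e s v : evalGE e s Div v Div.

CoInductive coevalG : cmd -> store -> status -> store -> status -> Prop :=
  | G_skip s : coevalG Cskip s Conv s Conv
  | G_alloc x s : x \notin domf s -> coevalG (Calloc x) s Conv s.[x <- Vnull] Conv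
  | G_assign x e s v d : x \in domf s -> evalGE e s Conv v d ->
      coevalG (Cassign x e) s Conv s.[x <- v] d
  | G_seq c1 c2 s s' s'' d d' :
      coevalG c1 s Conv s' d -> coevalG c2 s' d s'' d' ->
      coevalG (Cseq c1 c2) s Conv s'' d'
  | G_if_true e c1 c2 s s' v d d' : v <> Vnat 0 -> evalGE e s Conv v d ->
      coevalG c1 s d s' d' -> coevalG (Cif e c1 c2) s Conv s' d'
  | G_if_false e c1 c2 s s' d d' : evalGE e s Conv (Vnat 0) d ->
      coevalG c2 s d s' d' -> coevalG (Cif e c1 c2) s Conv s' d'
  | G_while_true e c s s' s'' v d d' d'' :
      evalGE e s Conv v d -> v <> Vnat 0 -> coevalG c s d s' d' ->
      coevalG (Cwhile e c) s' d' s'' d'' -> coevalG (Cwhile e c) s Conv s'' d''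
  | G_while_false e c s d : evalGE e s Conv (Vnat 0) d ->
      coevalG (Cwhile e c) s Conv s d
  | G_div c s s' : coevalG c s Div s' Div.

(* Main.v *)
From Stdlib Require Import Classical.
Require Import Defs.
From mathcomp Require Import all_boot finmap.

Lemma evalE_GE e s v : evalE e s v -> evalGE e s Conv v Conv.
Proof. induction 1; econstructor; eauto. Qed.

Lemma GE_evalE_ e s d0 v d : evalGE e s d0 v d -> d0 = Conv -> d = Conv /\ evalE e s v.
Proof.
  induction 1; intros Hc; try discriminate; try (split; [reflexivity|constructor; auto]).
  destruct (IHevalGE1 Hc) as [-> H1]. destruct (IHevalGE2 (erefl Conv)) as [-> H2].
  split; [reflexivity|constructor; auto].
Qed.

Definition GE_evalE := GE_evalE_.
Arguments GE_evalE {e s d0 v d}.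

Lemma evalE_det e s v : evalE e s v -> forall v', evalE e s v' -> v = v'.
Proof.
  induction 1; intros v' H'; inversion H'; subst; auto.
  - congruence.
  - match goal with A : evalE e1 _ _, B : evalE e2 _ _ |- _ =>
      specialize (IHevalE1 _ A); specialize (IHevalE2 _ B) end. congruence.
Qed.

Lemma big_co c s t : bigstep c s t -> coevalG c s Conv t Conv.
Proof.
  induction 1; try (econstructor; eauto using evalE_GE; fail).
Qed.

Arguments evalE_det {e s v} _ {v'} _.

Ltac ge_all :=
  repeat match goal with
  | A : evalGE _ _ Conv _ _ |- _ =>
      let d := fresh "d" in let He := fresh "He" in
      destruct (GE_evalE A (erefl Conv)) as [d He]; subst; clear A
  end.

Ltac ev_unify :=
  repeat match goal with
  | A : evalE ?e ?s ?v, B : evalE ?e ?s ?w |- _ =>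
      let E := fresh in assert (E := evalE_det A B); clear B; subst
  end.

Lemma det c s t : bigstep c s t -> forall s1 d, coevalG c s Conv s1 d -> s1 = t /\ d = Conv.
Proof.
  induction 1; intros s1 d0 HG; inversion HG; subst; ge_all; ev_unify;
    try (exfalso; congruence); auto.
  all: match goal with IH : forall s1 d, coevalG ?c ?s Conv s1 d -> _, A : coevalG ?c ?s Conv _ _ |- _ =>
    destruct (IH _ _ A) as [-> ->] end; eauto.
Qed.

Arguments det {c s t} _ {s1 d} _.

Arguments big_co {c s t} _.
Arguments evalE_GE {e s v} _.

CoFixpoint fwd c s s' (H : diverges c s) : coevalG c s Conv s' Div :=
  match H in diverges c s return coevalG c s Conv s' Div with
  | D_seq1 c1 c2 s H1 => G_seq (fwd _ _ s' H1) (G_div c2 s' s')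
  | D_seq2 c1 c2 s s1 B H2 => G_seq (big_co B) (fwd _ _ s' H2)
  | D_if_true e c1 c2 s v E nz H1 => G_if_true c2 nz (evalE_GE E) (fwd _ _ s' H1)
  | D_if_false e c1 c2 s E H2 => G_if_false c1 (evalE_GE E) (fwd _ _ s' H2)
  | D_while1 e c s v E nz H1 => G_while_true (evalE_GE E) nz (fwd _ _ s' H1) (G_div _ s' s')
  | D_while2 e c s s1 v E nz B H2 => G_while_true (evalE_GE E) nz (big_co B) (fwd _ _ s' H2)
  end.


CoFixpoint bwd c s s1 d (H : coevalG c s Conv s1 d) (N : ~ exists t, bigstep c s t) : diverges c s.
Proof.
  inversion H; subst.
  - exfalso; apply N; eexists; constructor.
  - exfalso; apply N; eexists; constructor; eauto.
  - destruct (GE_evalE H1 (erefl Conv)) as [_ He].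
    exfalso; apply N; eexists; econstructor; eauto.
  - destruct (classic (exists t, bigstep c1 s t)) as [[t Ht]|Hn].
    + destruct (det Ht H0) as [-> ->].
      eapply D_seq2; [exact Ht|]. apply (bwd _ _ _ _ H1).
      intros [u Hu]; apply N; eexists; econstructor; eauto.
    + apply D_seq1. apply (bwd _ _ _ _ H0 Hn).
  - destruct (GE_evalE H1 (erefl Conv)) as [-> He].
    eapply D_if_true; [exact He|exact H0|]. apply (bwd _ _ _ _ H2).
    intros [u Hu]; apply N; eexists; eapply B_if_true; eauto.
  - destruct (GE_evalE H0 (erefl Conv)) as [-> He].
    eapply D_if_false; [exact He|]. apply (bwd _ _ _ _ H1).
    intros [u Hu]; apply N; eexists; eapply B_if_false; eauto.
  - destruct (GE_evalE H0 (erefl Conv)) as [-> He].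
    destruct (classic (exists t, bigstep c0 s t)) as [[t Ht]|Hn].
    + destruct (det Ht H2) as [-> ->].
      eapply D_while2; [exact He|exact H1|exact Ht|]. apply (bwd _ _ _ _ H3).
      intros [u Hu]; apply N; eexists; eapply B_while_true; eauto.
    + eapply D_while1; [exact He|exact H1|]. apply (bwd _ _ _ _ H2 Hn).
  - destruct (GE_evalE H0 (erefl Conv)) as [-> He].
    exfalso; apply N; eexists; eapply B_while_false; eauto.
Qed.


Arguments bwd {c s s1 d} _ _.

Theorem theorem18 (c : cmd) (s s' : store) :
  diverges c s <-> coevalG c s Conv s' Div.
Proof.
  split; [apply fwd|].
  intros H. destruct (classic (exists t, bigstep c s t)) as [[t Ht]|Hn].
  - destruct (det Ht H) as [_ E]; discriminate.
  - exact (bwd H Hn).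
Qed.
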